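(* For any graph $G$ with no isolated vertex and any noncomplete graph $H$ with $\gamma(H)=1$, $\gamma_{(1,0,0)}^s(G\circ H)=\gamma_{(2,1,0)}(G)$.
   Context: All graphs are finite and simple; $\gamma(H)$ is the domination number; $N(v)$ is the open neighbourhood. For an integer $l\ge1$ and $w=(w_0,\dots,w_l)$ with $w_0\ge1$, $w_i\ge0$ integers, a function $f:V(G)\to\{0,\dots,l\}$ is a $w$-dominating function if $\sum_{u\in N(v)}f(u)\ge w_i$ for every vertex $v$ with $f(v)=i$; its weight is $\sum_v f(v)$, and $\gamma_w(G)$ is the minimum weight of a $w$-dominating function. For adjacent $v,u$ with $f(v)=0$, $f(u)>0$, $f_{u\to v}$ is defined by $f_{u\to v}(v)=1$, $f_{u\to v}(u)=f(u)-1$, $f_{u\to v}(x)=f(x)$ otherwise. A $w$-dominating $f$ is secure if for every $v$ with $f(v)=0$ there is $u\in N(v)$ with $f(u)>0$ such that $f_{u\to v}$ is $w$-dominating; $\gamma_w^s(G)$ is the minimum weight of a secure $w$-dominating function. The lexicographic product $G\circ H$ has vertex set $V(G)\times V(H)$, with $(u,v)(x,y)$ an edge iff $ux\in E(G)$, or $u=x$ and $vy\in E(H)$. *)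

(* Defs.v *)
From mathcomp Require Import all_boot.
Set Implicit Arguments. Unset Strict Implicit. Unset Printing Implicit Defensive.

Definition simple_graph (T : finType) (e : rel T) : Prop :=
  symmetric e /\ irreflexive e.

Definition no_isolated (T : finType) (e : rel T) : Prop :=
  forall v, exists u, e v u.

Definition noncomplete (T : finType) (e : rel T) : Prop :=
  exists x y, x != y /\ ~~ e x y.

Definition dominating (T : finType) (e : rel T) (D : {set T}) : bool :=
  [forall v, (v \in D) || [exists u in D, e v u]].

Definition domination_number (T : finType) (e : rel T) : nat :=
  \big[minn/#|T|]_(D : {set T} | dominating e D) #|D|.

(* w = (w_0, ..., w_l) is encoded as the sequence w of size l+1;
   f takes values in {0, ..., l}, i.e. f v < size w. *)
Definition nbsum (T : finType) (e : rel T) (f : T -> nat) (v : T) : nat :=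
  \sum_(u | e v u) f u.

Definition wdom (T : finType) (e : rel T) (w : seq nat) (f : T -> nat) : bool :=
  [forall v, (f v < size w) && (nth 0 w (f v) <= nbsum e f v)].

Definition weight (T : finType) (f : T -> nat) : nat := \sum_v f v.

Definition fmove (T : finType) (f : T -> nat) (u v : T) : T -> nat :=
  fun x => if x == v then 1 else if x == u then (f u).-1 else f x.

Definition secure_wdom (T : finType) (e : rel T) (w : seq nat) (f : T -> nat) : bool :=
  wdom e w f &&
  [forall v, (f v == 0) ==>
     [exists u, [&& e v u, 0 < f u & wdom e w (fmove f u v)]]].

(* The default #|T| * size w exceeds every possible
   weight and is only used if no such function exists. *)
Definition gamma_w (T : finType) (e : rel T) (w : seq nat) : nat :=
  \big[minn/(#|T| * size w)]_(f : {ffun T -> 'I_(size w)} | wdom e w (fun x => nat_of_ord (f x)))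
     weight (fun x => nat_of_ord (f x)).

Definition gamma_ws (T : finType) (e : rel T) (w : seq nat) : nat :=
  \big[minn/(#|T| * size w)]_(f : {ffun T -> 'I_(size w)} | secure_wdom e w (fun x => nat_of_ord (f x)))
     weight (fun x => nat_of_ord (f x)).

Definition lexprod (T U : finType) (eG : rel T) (eH : rel U) : rel (T * U) :=
  fun p q => eG p.1 q.1 || ((p.1 == q.1) && eH p.2 q.2).

(* Main.v *)
Require Import Defs.
From mathcomp Require Import all_boot zify.
From Stdlib Require Import FunctionalExtensionality.
Set Implicit Arguments. Unset Strict Implicit.

Lemma bigmin_le (I : finType) (P : pred I) (F : I -> nat) idx i :
  P i -> \big[minn/idx]_(j | P j) F j <= F i.
Proof.
move=> Pi; have: i \in index_enum I by rewrite mem_index_enum.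
elim: (index_enum I) => [|a r IH] //; rewrite inE big_cons.
case/orP=> [/eqP <-|ir]; first by rewrite Pi geq_minl.
case: (P a); last exact: IH.
exact: leq_trans (geq_minr _ _) (IH ir).
Qed.

Lemma le_bigmin (I : finType) (P : pred I) (F : I -> nat) idx x :
  x <= idx -> (forall i, P i -> x <= F i) -> x <= \big[minn/idx]_(j | P j) F j.
Proof.
move=> hi hF; apply: (big_ind (fun y => x <= y)) => // a b ha hb.
by rewrite leq_min ha hb.
Qed.

Lemma bigmin_att (I : finType) (P : pred I) (F : I -> nat) idx :
  \big[minn/idx]_(j | P j) F j = idx \/
  exists i, P i /\ \big[minn/idx]_(j | P j) F j = F i.
Proof.
apply: (big_ind (fun y => y = idx \/ exists i, P i /\ y = F i)); first by left.
  move=> a b ha hb /=; case: (leqP a b) => ab.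
    exact: ha.
  exact: hb.
by move=> i Pi; right; exists i.
Qed.

Lemma pos_sum (I : finType) (P : pred I) (F : I -> nat) :
  0 < \sum_(i | P i) F i <-> exists i, P i /\ 0 < F i.
Proof.
split.
  case: (pickP (fun i => P i && (0 < F i))) => [i /andP[]|H]; first by eauto.
  rewrite big1 // => i Pi; move: (H i); rewrite Pi /=; lia.
move=> [i [Pi Fi]]; rewrite (bigD1 i) //=; exact: ltn_addr.
Qed.

Lemma sum_one (I : finType) (P : pred I) (F : I -> nat) i :
  P i -> F i <= \sum_(k | P k) F k.
Proof. by move=> Pi; rewrite (bigD1 i) //= leq_addr. Qed.

Lemma sum_two (I : finType) (P : pred I) (F : I -> nat) i j :
  i != j -> P i -> P j -> F i + F j <= \sum_(k | P k) F k.
Proof.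
move=> ij Pi Pj; rewrite (bigD1 i) //= (bigD1 j) /=; last by rewrite Pj eq_sym ij.
by rewrite addnA leq_addr.
Qed.

Lemma wdom1P (T : finType) (e : rel T) F :
  wdom e [:: 1; 0; 0] F <->
  (forall v, F v < 3) /\ (forall v, F v = 0 -> exists u, e v u /\ 0 < F u).
Proof.
rewrite /wdom; split.
  move/forallP=> H; split=> v; first by case/andP: (H v).
  move=> F0; case/andP: (H v); rewrite F0 /= => _ h; apply/pos_sum; exact: h.
move=> [H1 H2]; apply/forallP=> v; rewrite H1 /=.
case E: (F v) => [|[|[|n]]] //=; last by rewrite nth_nil.
apply/pos_sum; exact: H2.
Qed.

Lemma wdom2P (T : finType) (e : rel T) g :
  wdom e [:: 2; 1; 0] g <->
  (forall v, g v < 3) /\ (forall v, g v = 0 -> 2 <= nbsum e g v) /\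
  (forall v, g v = 1 -> exists u, e v u /\ 0 < g u).
Proof.
rewrite /wdom; split.
  move/forallP=> H; split; first by move=> v; case/andP: (H v).
  split=> v F0; case/andP: (H v); rewrite F0 /= => _ h //.
  apply/pos_sum; exact: h.
move=> [H1 [H2 H3]]; apply/forallP=> v; rewrite H1 /=.
case E: (g v) => [|[|[|n]]] //=; [exact: H2| |by rewrite nth_nil].
apply/pos_sum; exact: H3.
Qed.

Lemma secureP (T : finType) (e : rel T) w F :
  secure_wdom e w F <-> wdom e w F /\
  (forall v, F v = 0 -> exists u, [/\ e v u, 0 < F u & wdom e w (fmove F u v)]).
Proof.
rewrite /secure_wdom; split.
  move/andP=> [h1 /forallP h2]; split=> // v v0; move: (h2 v); rewrite v0 eqxx /=.
  by move/existsP=> [u /and3P[a b c]]; exists u.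
move=> [h1 h2]; apply/andP; split=> //; apply/forallP=> v; apply/implyP=> /eqP v0.
have [u [a b c]] := h2 v v0; apply/existsP; exists u; by rewrite a b c.
Qed.

Lemma fmove_lt3 (T : finType) (F : T -> nat) u v :
  (forall x, F x < 3) -> forall x, fmove F u v x < 3.
Proof.
move=> H x; rewrite /fmove; case: (x == v) => //; case: (x == u) => //.
exact: leq_ltn_trans (leq_pred _) (H u).
Qed.

Lemma fmove_other (T : finType) (F : T -> nat) u v x :
  x != u -> x != v -> fmove F u v x = F x.
Proof. by rewrite /fmove => /negbTE -> /negbTE ->. Qed.

Lemma fmove_tgt (T : finType) (F : T -> nat) u v : fmove F u v v = 1.
Proof. by rewrite /fmove eqxx. Qed.

Lemma fmove_src (T : finType) (F : T -> nat) u v :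
  u != v -> fmove F u v u = (F u).-1.
Proof. by rewrite /fmove eqxx => /negbTE ->. Qed.

Lemma sum_one_all (I : finType) (F : I -> nat) i : F i <= \sum_k F k.
Proof. exact: (sum_one (P := predT)). Qed.

Lemma sum_two_all (I : finType) (F : I -> nat) i j :
  i != j -> F i + F j <= \sum_k F k.
Proof. move=> ij; exact: (sum_two (P := predT)). Qed.

Section Lex.
Variables (T U : finType) (eG : rel T) (eH : rel U).
Local Notation E := (lexprod eG eH).

Lemma EG a b c d : eG a c -> E (a, b) (c, d).
Proof. by rewrite /lexprod /= => ->. Qed.

Lemma EH a b d : eH b d -> E (a, b) (a, d).
Proof. by rewrite /lexprod /= eqxx => ->; rewrite orbT. Qed.

Lemma Einv a b c d : E (a, b) (c, d) -> eG a c \/ (a = c /\ eH b d).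
Proof. by rewrite /lexprod /= => /orP[-> | /andP[/eqP -> ->]]; [left|right]. Qed.

Lemma pair_inj (a c : T) (b d : U) : (a, b) = (c, d) -> a = c /\ b = d.
Proof. by case. Qed.

Lemma pair_neq1 (a c : T) (b d : U) : a != c -> (a, b) != (c, d).
Proof. by move=> ac; rewrite xpair_eqE (negbTE ac). Qed.

Lemma pair_neq2 (a c : T) (b d : U) : b != d -> (a, b) != (c, d).
Proof. by move=> bd; rewrite xpair_eqE (negbTE bd) andbF. Qed.

Lemma lower (x y : U) (F : T * U -> nat) :
  irreflexive eG -> symmetric eH -> x != y -> ~~ eH x y ->
  secure_wdom E [:: 1; 0; 0] F ->
  wdom eG [:: 2; 1; 0] (fun v => minn 2 (\sum_z F (v, z))).
Proof.
move=> iG sH xy nxy /secureP [/wdom1P [F3 Fdom] Fsec].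
set s := fun v => \sum_z F (v, z).
set g := fun v => minn 2 (s v).
have sle : forall v z, F (v, z) <= s v by move=> v z; exact: sum_one_all.
have spos : forall u b, 0 < F (u, b) -> 0 < g u.
  by move=> u b h; rewrite /g; have := sle u b; lia.
have s2 : forall u b b', b != b' -> 0 < F (u, b) -> 0 < F (u, b') -> g u = 2.
  move=> u b b' bb h1 h2; have := sum_two_all (fun z => F (u, z)) bb.
  move=> HH; apply/minn_idPl; exact: leq_trans (leq_add h1 h2) HH.
have s2' : forall u b, 2 <= F (u, b) -> g u = 2.
  by move=> u b h; rewrite /g; have := sle u b; lia.
apply/wdom2P; split; first by move=> v; rewrite /g; lia.
split.
- move=> v gv0.
  have sv0 : forall z, F (v, z) = 0 by move=> z; have := sle v z; rewrite /g in gv0; lia.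
  have [[u b] [Eq Fq wq]] := Fsec (v, x) (sv0 x).
  have vu : eG v u.
    case: (Einv Eq) => // [[vu _]]; by move: Fq; rewrite -vu sv0.
  have uv : u != v by apply/eqP=> uv; move: vu; rewrite uv iG.
  have [_ F'dom] := (wdom1P _ _).1 wq.
  have [[a c] [Eq' Fq']] : exists q, E (v, y) q /\ 0 < fmove F (u, b) (v, x) q.
    apply: F'dom; rewrite fmove_other ?sv0 //.
      by apply: pair_neq1; rewrite eq_sym.
    by apply: pair_neq2; rewrite eq_sym.
  case: (eqVneq (a, c) (v, x)) => [/pair_inj [Ha Hc]|ne1].
    subst a c.
    by case: (Einv Eq') => [|[_]]; [rewrite iG | rewrite sH (negbTE nxy)].
  case: (eqVneq (a, c) (u, b)) => [/pair_inj [Ha Hc]|ne2].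
    subst a c.
    rewrite fmove_src in Fq'; last exact: pair_neq1.
    have := sum_one (fun u => g u) vu; rewrite (s2' u b) /nbsum //; lia.
  rewrite fmove_other // in Fq'.
  have va : eG v a.
    case: (Einv Eq') => // [[va _]]; by move: Fq'; rewrite -va sv0.
  case: (eqVneq a u) => [au|au].
    have cb : c != b by apply: contraNneq ne2 => ->; rewrite au.
    have := sum_one (fun u => g u) vu; rewrite /nbsum (s2 u c b) //; last by rewrite -au.
  have := sum_two (fun u => g u) au va vu; rewrite /nbsum.
  have := spos a c Fq'; have := spos u b Fq; lia.
- move=> v gv1.
  case: (pickP (fun u => eG v u && (0 < g u))) => [u /andP[]|Hn]; first by eauto.
  exfalso.
  have nz : forall u b, eG v u -> F (u, b) = 0.
    move=> u b vu; case: (posnP (F (u, b))) => // h.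
    by move: (Hn u); rewrite vu (spos u b h).
  have sv1 : s v = 1 by rewrite /g in gv1; lia.
  have [z0 [_ Fz0]] : exists z0, true /\ 0 < F (v, z0) by apply/pos_sum; rewrite -/(s v) sv1.
  have uniq : forall b, b != z0 -> F (v, b) = 0.
    move=> b bz; case: (posnP (F (v, b))) => // h.
    have := sum_two_all (fun z => F (v, z)) bz.
    by move/(leq_trans (leq_add h Fz0)); rewrite -/(s v) sv1.
  have Fz01 : F (v, z0) = 1 by have := sle v z0; lia.
  have [z [t [zz0 tz ntz]]] : exists z t, [/\ z != z0, t != z & ~~ eH t z].
    case: (eqVneq x z0) => [xz|xz].
      exists y, x; split => //; first by rewrite -xz eq_sym.
    exists x, y; split => //; first by rewrite eq_sym.
    by rewrite sH.
  have [[a b] [Eq Fq wq]] := Fsec (v, z) (uniq z zz0).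
  case: (Einv Eq) => [va|[av zb]].
    by move: Fq; rewrite nz.
  subst a.
  have bz0 : b = z0.
    by apply/eqP; apply: contraLR Fq => /uniq ->.
  subst b.
  have [_ F'dom] := (wdom1P _ _).1 wq.
  have [[a c] [Eq' Fq']] : exists q, E (v, t) q /\ 0 < fmove F (v, z0) (v, z) q.
    apply: F'dom.
    case: (eqVneq t z0) => [->|tz0].
      by rewrite fmove_src ?Fz01 //; apply: pair_neq2; rewrite eq_sym.
    by rewrite fmove_other ?uniq //; apply: pair_neq2.
  case: (eqVneq (a, c) (v, z)) => [/pair_inj [Ha Hc]|ne1].
    subst a c.
    by case: (Einv Eq') => [|[_]]; [rewrite iG | rewrite (negbTE ntz)].
  case: (eqVneq (a, c) (v, z0)) => [/pair_inj [Ha Hc]|ne2].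
    subst a c.
    by rewrite fmove_src ?Fz01 // in Fq'; apply: pair_neq2; rewrite eq_sym.
  rewrite fmove_other // in Fq'.
  case: (Einv Eq') => [va|[av _]]; first by move: Fq'; rewrite nz.
  subst a; have cz0 : c != z0 by apply: contraNneq ne2 => ->.
  by move: Fq'; rewrite uniq.
Qed.

End Lex.

Section Up.
Variables (T U : finType) (eG : rel T) (eH : rel U).
Local Notation E := (lexprod eG eH).

Lemma g0ext (g : T -> nat) v : 2 <= nbsum eG g v ->
  exists u, [/\ eG v u, 0 < g u &
    (2 <= g u \/ exists u', [/\ u' != u, eG v u' & 0 < g u'])].
Proof.
move=> h2.
have [u [vu gu]] : exists u, eG v u /\ 0 < g u.
  by apply/pos_sum; exact: leq_trans h2.
exists u; split => //.
case: (leqP 2 (g u)) => g2; first by left.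
right; move: h2; rewrite /nbsum (bigD1 u) //= => h2.
have : 0 < \sum_(i | eG v i && (i != u)) g i by move: h2 g2; lia.
by move/pos_sum=> [u' [/andP[vu' u'u] gu']]; exists u'.
Qed.

Lemma upper (h : U) (g : T -> nat) :
  symmetric eG -> irreflexive eG -> (forall z, z != h -> eH z h) ->
  wdom eG [:: 2; 1; 0] g ->
  secure_wdom E [:: 1; 0; 0] (fun p => if p.2 == h then g p.1 else 0).
Proof.
move=> sG iG univ /wdom2P [g3 [g0 g1]].
set F := fun p : T * U => if p.2 == h then g p.1 else 0.
have Fh : forall v, F (v, h) = g v by move=> v; rewrite /F /= eqxx.
have Fz : forall v z, z != h -> F (v, z) = 0 by move=> v z /negbTE; rewrite /F /= => ->.
have F3 : forall p, F p < 3 by move=> [a b]; rewrite /F /=; case: (b == h).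
have neqG : forall a c, eG a c -> a != c.
  by move=> a c ac; apply/eqP=> e; move: ac; rewrite e iG.
have zh : forall v z, F (v, z) = 0 -> 0 < g v -> z != h.
  by move=> v z F0 gv; apply/eqP=> e; move: F0; rewrite e Fh; lia.
apply/secureP; split.
  apply/wdom1P; split => // [[v z]] F0.
  case: (posnP (g v)) => gv.
    have [u [vu gu _]] := g0ext (g0 v gv).
    by exists (u, h); rewrite EG // Fh.
  by exists (v, h); rewrite EH ?Fh // univ // (zh v z).
move=> [v z] F0.
case: (posnP (g v)) => gv; last first.
  have zh' := zh v z F0 gv.
  exists (v, h); split; [by rewrite EH // univ | by rewrite Fh |].
  have vzh : (v, h) != (v, z) by apply: pair_neq2; rewrite eq_sym.
  apply/wdom1P; split; first exact: fmove_lt3.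
  move=> [a b] F'0.
  case: (eqVneq (a, b) (v, z)) => [/pair_inj [Ha Hb]|ne1].
    by subst a b; move: F'0; rewrite fmove_tgt.
  case: (eqVneq (a, b) (v, h)) => [/pair_inj [Ha Hb]|ne2].
    subst a b; move: F'0; rewrite fmove_src // Fh => gv1.
    have [u [vu gu]] := g1 v ltac:(lia).
    exists (u, h); rewrite EG // fmove_other ?Fh //.
      by apply: pair_neq1; rewrite eq_sym neqG.
    by apply: pair_neq1; rewrite eq_sym neqG.
  move: F'0; rewrite fmove_other // => Fab.
  case: (posnP (g a)) => ga.
    have [c [ac gc _]] := g0ext (g0 a ga).
    case: (eqVneq c v) => [cv|cv].
      by subst c; exists (v, z); rewrite EG // fmove_tgt.
    by exists (c, h); rewrite EG // fmove_other ?Fh //; apply: pair_neq1.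
  have bh := zh a b Fab ga.
  case: (eqVneq a v) => [av|av]; last first.
    by exists (a, h); rewrite EH ?univ // fmove_other ?Fh //; apply: pair_neq1.
  subst a.
  case: (eqVneq (g v) 2) => [gv2|gv2].
    by exists (v, h); rewrite EH ?univ // fmove_src // Fh gv2.
  have [u [vu gu]] := g1 v ltac:(have := g3 v; lia).
  exists (u, h); rewrite EG // fmove_other ?Fh //.
    by apply: pair_neq1; rewrite eq_sym neqG.
  by apply: pair_neq1; rewrite eq_sym neqG.
have [u [vu gu alt]] := g0ext (g0 v gv).
have uv : u != v by rewrite eq_sym neqG.
exists (u, h); split; [by rewrite EG | by rewrite Fh |].
have uhvz : (u, h) != (v, z) by apply: pair_neq1.
apply/wdom1P; split; first exact: fmove_lt3.
have cpos : forall c b, 0 < g c -> c != u -> 0 < fmove F (u, h) (v, z) (c, b) ->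
   True by [].
have poscopy : forall c, 0 < g c -> c != u -> 0 < fmove F (u, h) (v, z) (c, h).
  move=> c gc cu; have cv : c != v by apply/eqP=> e; move: gc; rewrite e gv.
  by rewrite fmove_other ?Fh //; apply: pair_neq1.
have posu : 2 <= g u -> 0 < fmove F (u, h) (v, z) (u, h).
  by move=> g2; rewrite fmove_src // Fh; lia.
move=> [a b] F'0.
case: (eqVneq (a, b) (v, z)) => [/pair_inj [Ha Hb]|ne1].
  by subst a b; move: F'0; rewrite fmove_tgt.
case: (eqVneq (a, b) (u, h)) => [/pair_inj [Ha Hb]|ne2].
  subst a b; move: F'0; rewrite fmove_src // Fh => gu1.
  by exists (v, z); rewrite EG ?fmove_tgt // sG.
move: F'0; rewrite fmove_other // => Fab.
case: (posnP (g a)) => ga.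
  have [c [ac gc alt']] := g0ext (g0 a ga).
  case: (eqVneq c u) => [cu|cu]; last by exists (c, h); rewrite EG // poscopy.
  subst c; case: alt' => [g2|[c' [c'u ac' gc']]].
    by exists (u, h); rewrite EG // posu.
  by exists (c', h); rewrite EG // poscopy.
have bh := zh a b Fab ga.
case: (eqVneq a u) => [au|au]; last first.
  by exists (a, h); rewrite EH ?univ // poscopy.
subst a.
case: (leqP 2 (g u)) => g2.
  by exists (u, h); rewrite EH ?univ // posu.
by exists (v, z); rewrite EG ?fmove_tgt // sG.
Qed.

End Up.

Lemma gamma_w_le (T : finType) (e : rel T) (g : T -> nat) :
  wdom e [:: 2; 1; 0] g -> gamma_w e [:: 2; 1; 0] <= weight g.
Proof.
move=> Hg; have [g3 _] := (wdom2P _ _).1 Hg.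
pose gg : {ffun T -> 'I_(size [:: 2; 1; 0])} := [ffun v => @inord 2 (g v)].
have ggE : (fun v => nat_of_ord (gg v)) = g.
  by apply: functional_extensionality => v; rewrite ffunE inordK.
rewrite /gamma_w; apply: leq_trans (bigmin_le _ _ (i := gg) _) _; rewrite ggE //.
Qed.

Lemma gamma_ws_le (T : finType) (e : rel T) (g : T -> nat) :
  secure_wdom e [:: 1; 0; 0] g -> gamma_ws e [:: 1; 0; 0] <= weight g.
Proof.
move=> Hg; have [g3 _] := (secureP _ _ _).1 Hg; have [g3' _] := (wdom1P _ _).1 g3.
pose gg : {ffun T -> 'I_(size [:: 1; 0; 0])} := [ffun v => @inord 2 (g v)].
have ggE : (fun v => nat_of_ord (gg v)) = g.
  by apply: functional_extensionality => v; rewrite ffunE inordK.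
rewrite /gamma_ws; apply: leq_trans (bigmin_le _ _ (i := gg) _) _; rewrite ggE //.
Qed.

Lemma weight2 (T : finType) : weight (fun _ : T => 2) = #|T| * 2.
Proof. by rewrite /weight sum_nat_const. Qed.

Lemma wdom_const2 (T : finType) (e : rel T) : wdom e [:: 2; 1; 0] (fun _ => 2).
Proof. by apply/forallP. Qed.

Lemma weight_pair (T U : finType) (F : T * U -> nat) :
  weight F = \sum_v \sum_z F (v, z).
Proof.
rewrite /weight (pair_bigA _ (fun v z => F (v, z))).
by apply: eq_bigr => -[].
Qed.

Theorem theorem15 (T U : finType) (eG : rel T) (eH : rel U) :
  simple_graph eG -> simple_graph eH ->
  no_isolated eG -> noncomplete eH -> domination_number eH = 1 ->
  gamma_ws (lexprod eG eH) [:: 1; 0; 0] = gamma_w eG [:: 2; 1; 0].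
Proof.
move=> [sG iG] [sH iH] _ [x [y [xy nxy]]] dom1.
have cardU : 1 < #|U| by apply/card_gt1P; exists x, y.
have [h univ] : exists h, forall z, z != h -> eH z h.
  move: dom1; rewrite /domination_number.
  case: (bigmin_att (fun D => dominating eH D) (fun D : {set U} => #|D|) #|U|) => [-> c1|[D [domD ->]] /eqP /cards1P [h Dh]].
    by move: cardU; rewrite c1.
  exists h => z zh; move/forallP: domD => /(_ z); rewrite Dh in_set1 (negbTE zh) /=.
  by case/existsP=> u /andP[/set1P -> ].
apply/eqP; rewrite eqn_leq; apply/andP; split.
  have key : forall g, wdom eG [:: 2; 1; 0] g -> gamma_ws (lexprod eG eH) [:: 1; 0; 0] <= weight g.
    move=> g Hg; have up := upper sG iG univ Hg.
    apply: leq_trans (gamma_ws_le up) _.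
    rewrite weight_pair /weight; apply: leq_sum => v _ /=.
    by rewrite -big_mkcond big_pred1_eq.
  rewrite /gamma_w; apply: le_bigmin => [|gg Pg]; last exact: key.
  apply: leq_trans (key _ (wdom_const2 eG)) _; rewrite weight2 leq_mul2l; by case: #|T|.
have key : forall F, secure_wdom (lexprod eG eH) [:: 1; 0; 0] F -> gamma_w eG [:: 2; 1; 0] <= weight F.
  move=> F HF; have low := lower iG sH xy nxy HF.
  apply: leq_trans (gamma_w_le low) _.
  rewrite weight_pair /weight; apply: leq_sum => v _; exact: geq_minr.
rewrite /gamma_ws; apply: le_bigmin => [|ff Pf]; last exact: key.
apply: leq_trans (gamma_w_le (wdom_const2 eG)) _; rewrite weight2 card_prod /=.
move: cardU; set a := #|T|; set b := #|U|; nia.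
Qed.
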